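(* Let $L$ be a multisorted algebra in the first order signature without equality. Then $L$ satisfies axioms (0)–(10) if and only if $L$ is isomorphic to a subalgebra of the first order algebra (without equality) $A(W)$ of some set $W$.
   Context: Throughout, the Boolean prime ideal theorem is assumed. Signature. There is a sort $n$ for each natural number $n\ge0$. For every function $\alpha\colon\{1,\dots,n\}\to\{1,\dots,k\}$ there is a unary function symbol (''substitution'') $\alpha\colon n\to k$ (argument of sort $n$, value of sort $k$). Each sort has constants $0,1$, binary $\vee,\wedge$, unary $\neg$; for each $n$ there is $\exists\colon n+1\to n$. For substitutions $\alpha\colon k\to n$, $\beta\colon n\to m$, $\beta\circ\alpha\colon k\to m$ is the substitution symbol of the composite function; $\beta(\alpha(r))$ is composition in an algebra; $\mathrm{id}$ is the identity substitution. The associated cylindrification of $\exists\colon n+1\to n$ is $c\colon n\to n+1$, $c(i)=i$; $\exists^{(n)}$ is $n$-fold projection. Concrete algebras. For a set $W$: $\alpha^{\mathrm{tuple}}(x_1,\dots,x_k)=(x_{\alpha(1)},\dots,x_{\alpha(n)})$, $\alpha^{\mathrm{relation}}(r)=\{\bar x\in W^k:\alpha^{\mathrm{tuple}}(\bar x)\in r\}$. The first order algebra $A(W)$ (without equality) interprets sort $n$ as $\mathcal P(W^n)$, $\alpha$ as $\alpha^{\mathrm{relation}}$, $0,1,\vee,\wedge,\neg$ as $\emptyset,W^n,\cup,\cap$, complement in $W^n$, and $\exists(r)=\{(x_1,\dots,x_n):\exists y\,(x_1,\dots,x_n,y)\in r\}$. Partitioning cylindrifications: for $k_1,\dots,k_m$,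 $n=\sum k_j$, the substitutions $c_i\colon k_i\to n$, $c_i(l)=l+\sum_{j<i}k_j$. $x\le y$ (also $y\ge x$) means $x=x\wedge y$. Axioms: (0) For partitioning cylindrifications $c_1,\dots,c_m$ and $r_i,s_i$ of sort $k_i$: if $\bigvee_i c_i(s_i)\ge\bigwedge_i c_i(r_i)$ then $s_i\ge r_i$ for some $i$ (including $m=0$: $0\ge1$ fails in sort $0$). (1) Each sort is a bounded distributive lattice. (2) Substitutions preserve $0,1,\vee,\wedge$. (3) $(\beta\circ\alpha)(r)=\beta(\alpha(r))$. (4) $\mathrm{id}(r)=r$. (5) $\alpha(\neg r)=\neg\alpha(r)$. (6) $r\vee\neg r=1$, $r\wedge\neg r=0$. (7) $\exists(0)=0$, $\exists(r\vee s)=\exists(r)\vee\exists(s)$. (8) $r\le c(\exists(r))$. (9) $\exists(r\wedge c(s))=\exists(r)\wedge s$. (10) For substitutions $\alpha_i\colon k_i\to m$ ($i=1,\dots,n$), let $\beta_i\colon k_i+1\to m+n$ with $\beta_i(j)=\alpha_i(j)$ for $j\le k_i$ and $\beta_i(k_i+1)=m+i$. Then for all $r_i$ of sort $k_i+1$: $\exists^{(n)}(\bigwedge_i\beta_i(r_i))=\bigwedge_i\alpha_i(\exists(r_i))$. *)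

(* Defs.v *)
From mathcomp Require Import all_boot.
Set Implicit Arguments. Unset Strict Implicit. Unset Printing Implicit Defensive.

(* A substitution symbol alpha : n -> k is given by a
   function alpha : 'I_n -> 'I_k (0-indexed version of {1..n} -> {1..k}),
   acting from sort n to sort k.  [ex n] : sort n.+1 -> sort n.            *)
Record msalg := MSAlg {
  car : nat -> Type;
  sub : forall n k : nat, ('I_n -> 'I_k) -> car n -> car k;
  zero : forall n, car n;
  one : forall n, car n;
  join : forall n, car n -> car n -> car n;
  meet : forall n, car n -> car n -> car n;
  neg : forall n, car n -> car n;
  ex : forall n, car n.+1 -> car n
}.
Arguments sub {m} {n k} _ _.
Arguments zero {m} n.
Arguments one {m} n.
Arguments join {m} {n} _ _.
Arguments meet {m} {n} _ _.
Arguments neg {m} {n} _.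
Arguments ex {m} {n} _.

Section FOLaws.
Variable L : msalg.

Definition le n (x y : car L n) : Prop := x = meet x y.

Definition cyl n : 'I_n -> 'I_n.+1 := widen_ord (leqnSn n).

Definition bigmeet p m (f : 'I_m -> car L p) : car L p :=
  \big[@meet L p / one p]_(i < m) f i.
Definition bigjoin p m (f : 'I_m -> car L p) : car L p :=
  \big[@join L p / zero p]_(i < m) f i.

Fixpoint exn m n : car L (m + n) -> car L m :=
  match n return car L (m + n) -> car L m with
  | 0 => fun r => ecast i (car L i) (addn0 m) r
  | n'.+1 => fun r => @exn m n' (ex (ecast i (car L i) (addnS m n') r))
  end.

Lemma part_cyl_subproof m (k : 'I_m -> nat) (i : 'I_m) (l : 'I_(k i)) :
  l + \sum_(j < m | j < i) k j < \sum_(j < m) k j.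
Proof.
rewrite [X in _ < X](bigID (fun j : 'I_m => j < i)) /= [l + _]addnC ltn_add2l.
rewrite (bigD1 i) ?ltnn //=; exact: (leq_trans (ltn_ord l) (leq_addr _ _)).
Qed.

Definition part_cyl m (k : 'I_m -> nat) (i : 'I_m) :
  'I_(k i) -> 'I_(\sum_(j < m) k j) :=
  fun l => Ordinal (part_cyl_subproof l).

(* beta_i of axiom (10): beta(j) = alpha(j) for j <= k, beta(k+1) = m+i *)
Definition beta10 m n k (alpha : 'I_k -> 'I_m) (i : 'I_n) :
  'I_k.+1 -> 'I_(m + n) :=
  fun j => match unlift ord_max j with
           | Some j' => @lshift m n (alpha j')
           | None => @rshift m n i
           end.

Definition ax0 : Prop :=
  forall (m : nat) (k : 'I_m -> nat)
         (r s : forall i : 'I_m, car L (k i)),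
    le (bigmeet (fun i => sub (@part_cyl m k i) (r i)))
       (bigjoin (fun i => sub (@part_cyl m k i) (s i))) ->
    exists i : 'I_m, le (r i) (s i).

Definition ax1 : Prop := forall n (x y z : car L n),
  ((join x (join y z) = join (join x y) z) /\
      (meet x (meet y z) = meet (meet x y) z) /\
      (join x y = join y x) /\
      (meet x y = meet y x) /\
      (join x (meet x y) = x) /\
      (meet x (join x y) = x) /\
      (meet x (join y z) = join (meet x y) (meet x z)) /\
      (join x (@zero L n) = x) /\
      (meet x (@one L n) = x)).

Definition ax2 : Prop := forall n k (alpha : 'I_n -> 'I_k) (x y : car L n),
  ((sub alpha (@zero L n) = @zero L k) /\
      (sub alpha (@one L n) = @one L k) /\
      (sub alpha (join x y) = join (sub alpha x) (sub alpha y)) /\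
      (sub alpha (meet x y) = meet (sub alpha x) (sub alpha y))).

Definition ax3 : Prop := forall k n m (alpha : 'I_k -> 'I_n)
  (beta : 'I_n -> 'I_m) (r : car L k),
  sub (fun i => beta (alpha i)) r = sub beta (sub alpha r).

Definition ax4 : Prop := forall n (r : car L n), sub id r = r.

Definition ax5 : Prop := forall n k (alpha : 'I_n -> 'I_k) (r : car L n),
  sub alpha (neg r) = neg (sub alpha r).

Definition ax6 : Prop := forall n (r : car L n),
  join r (neg r) = @one L n /\ meet r (neg r) = @zero L n.

Definition ax7 : Prop := forall n (r s : car L n.+1),
  ex (@zero L n.+1) = @zero L n /\ ex (join r s) = join (ex r) (ex s).

Definition ax8 : Prop := forall n (r : car L n.+1), le r (sub (@cyl n) (ex r)).

Definition ax9 : Prop := forall n (r : car L n.+1) (s : car L n),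
  ex (meet r (sub (@cyl n) s)) = meet (ex r) s.

Definition ax10 : Prop :=
  forall (m n : nat) (k : 'I_n -> nat)
         (alpha : forall i : 'I_n, 'I_(k i) -> 'I_m)
         (r : forall i : 'I_n, car L (k i).+1),
    @exn m n (bigmeet (fun i => sub (beta10 (alpha i) i) (r i)))
    = bigmeet (fun i => sub (alpha i) (ex (r i))).

Definition fo_axioms : Prop :=
  ((ax0) /\
      (ax1) /\
      (ax2) /\
      (ax3) /\
      (ax4) /\
      (ax5) /\
      (ax6) /\
      (ax7) /\
      (ax8) /\
      (ax9) /\
      (ax10)).

End FOLaws.

(* The first order algebra A(W) without equality: sort n is P(W^n),
   with W^n = 'I_n -> W and relations as predicates.                   *)
Definition rel (W : Type) n := ('I_n -> W) -> Prop.

Definition ext W n (x : 'I_n -> W) (y : W) : 'I_n.+1 -> W :=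
  fun i => match unlift ord_max i with Some j => x j | None => y end.

Definition subst_rel W n k (alpha : 'I_n -> 'I_k) (r : rel W n) : rel W k :=
  fun x => r (fun i => x (alpha i)).
Definition ex_rel W n (r : rel W n.+1) : rel W n :=
  fun x => exists y, r (ext x y).

(* f is an injective homomorphism L -> A(W), i.e. an isomorphism of L
   onto the subalgebra f(L) of A(W). *)
Definition embeds_into (L : msalg) (W : Type) (f : forall n, car L n -> rel W n)
  : Prop :=
  (((forall n (r s : car L n), f n r = f n s -> r = s)) /\
      ((forall n k (alpha : 'I_n -> 'I_k) (r : car L n),
          f k (sub alpha r) = subst_rel alpha (f n r))) /\
      ((forall n, f n (zero n) = (fun _ => False))) /\
      ((forall n, f n (one n) = (fun _ => True))) /\
      ((forall n (r s : car L n), f n (join r s) = (fun x => f n r x \/ f n s x))) /\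
      ((forall n (r s : car L n), f n (meet r s) = (fun x => f n r x /\ f n s x))) /\
      ((forall n (r : car L n), f n (neg r) = (fun x => ~ f n r x))) /\
      ((forall n (r : car L n.+1), f n (ex r) = ex_rel (f n.+1 r)))).

Definition represents_in_FO_algebra (L : msalg) : Prop :=
  exists (W : Type) (f : forall n, car L n -> rel W n), embeds_into f.

(* Main.v *)
Require Import Defs.
From mathcomp Require Import all_boot.
From mathcomp Require Import boolp.
From mathcomp Require classical_sets.
From mathcomp Require Import zify.
Set Implicit Arguments. Unset Strict Implicit. Unset Printing Implicit Defensive.

Definition ishom (L : msalg) (W : Type) (f : forall n, car L n -> Defs.rel W n) : Prop :=
      ((forall n k (alpha : 'I_n -> 'I_k) (r : car L n),
          f k (sub alpha r) = subst_rel alpha (f n r))) /\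
      ((forall n, f n (@Defs.zero L n) = (fun _ => False))) /\
      ((forall n, f n (@Defs.one L n) = (fun _ => True))) /\
      ((forall n (r s : car L n), f n (join r s) = (fun x => f n r x \/ f n s x))) /\
      ((forall n (r s : car L n), f n (meet r s) = (fun x => f n r x /\ f n s x))) /\
      ((forall n (r : car L n), f n (neg r) = (fun x => ~ f n r x))) /\
      ((forall n (r : car L n.+1), f n (ex r) = ex_rel (f n.+1 r))).

Section Hard.
Variable L : msalg.
Hypothesis A0 : ax0 L.
Hypothesis A1 : ax1 L.
Hypothesis A2 : ax2 L.
Hypothesis A3 : ax3 L.
Hypothesis A4 : ax4 L.
Hypothesis A5 : ax5 L.
Hypothesis A6 : ax6 L.
Hypothesis A7 : ax7 L.
Hypothesis A8 : ax8 L.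
Hypothesis A9 : ax9 L.
Hypothesis A10 : ax10 L.
Local Notation one := (@Defs.one L).
Local Notation zero := (@Defs.zero L).

Section Bool.
Context {n : nat}.
Implicit Types x y z : car L n.

Lemma joinA x y z : join x (join y z) = join (join x y) z. Proof. by case: (A1 x y z). Qed.
Lemma meetA x y z : meet x (meet y z) = meet (meet x y) z. Proof. by case: (A1 x y z) => _ []. Qed.
Lemma joinC x y : join x y = join y x. Proof. by case: (A1 x y x) => _ [] _ []. Qed.
Lemma meetC x y : meet x y = meet y x. Proof. by case: (A1 x y x) => _ [] _ [] _ []. Qed.
Lemma joinKI x y : join x (meet x y) = x. Proof. by case: (A1 x y x) => _ [] _ [] _ [] _ []. Qed.
Lemma meetKU x y : meet x (join x y) = x. Proof. by case: (A1 x y x) => _ [] _ [] _ [] _ [] _ []. Qed.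
Lemma meetUr x y z : meet x (join y z) = join (meet x y) (meet x z).
Proof. by case: (A1 x y z) => _ [] _ [] _ [] _ [] _ [] _ []. Qed.
Lemma join0 x : join x (zero n) = x. Proof. by case: (A1 x x x) => _ [] _ [] _ [] _ [] _ [] _ [] _ []. Qed.
Lemma meet1 x : meet x (one n) = x. Proof. by case: (A1 x x x) => _ [] _ [] _ [] _ [] _ [] _ [] _ []. Qed.
Lemma joinN x : join x (neg x) = one n. Proof. by case: (A6 x). Qed.
Lemma meetN x : meet x (neg x) = zero n. Proof. by case: (A6 x). Qed.

Lemma meetxx x : meet x x = x.
Proof. by rewrite -{2}(joinKI x x) meetKU. Qed.
Lemma meet0 x : meet (zero n) x = zero n.
Proof. have e : x = join (zero n) x by rewrite joinC join0.
by rewrite e meetKU. Qed.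
Lemma meetUl x y z : meet (join y z) x = join (meet y x) (meet z x).
Proof. by rewrite meetC meetUr (meetC x) (meetC x). Qed.

Lemma le_refl x : le x x. Proof. by rewrite /le meetxx. Qed.
Lemma le_trans x y z : le x y -> le y z -> le x z.
Proof. by rewrite /le => h1 h2; rewrite {1}h1 {1}h2 meetA -h1. Qed.
Lemma le_anti x y : le x y -> le y x -> x = y.
Proof. by rewrite /le => h1 h2; rewrite h1 meetC -h2. Qed.
Lemma meet_lel x y : le (meet x y) x.
Proof. by rewrite /le -meetA (meetC y x) meetA meetxx. Qed.
Lemma meet_ler x y : le (meet x y) y.
Proof. rewrite meetC; exact: meet_lel. Qed.
Lemma le_meet x y z : le z x -> le z y -> le z (meet x y).
Proof. by rewrite /le => h1 h2; rewrite meetA -h1 -h2. Qed.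
Lemma join_gel x y : le x (join x y). Proof. by rewrite /le meetKU. Qed.
Lemma join_ger x y : le y (join x y). Proof. rewrite joinC; exact: join_gel. Qed.
Lemma join_le x y z : le x z -> le y z -> le (join x y) z.
Proof. by rewrite /le => h1 h2; rewrite meetUl -h1 -h2. Qed.
Lemma le0 x : le (zero n) x. Proof. by rewrite /le meet0. Qed.
Lemma le1 x : le x (one n). Proof. by rewrite /le meet1. Qed.
Lemma le0_eq x : le x (zero n) -> x = zero n.
Proof. by move=> h; apply: le_anti => //; apply: le0. Qed.
Lemma meet_mono x y x' y' : le x x' -> le y y' -> le (meet x y) (meet x' y').
Proof.
move=> h1 h2; apply: le_meet; first exact: le_trans (meet_lel _ _) h1.
exact: le_trans (meet_ler _ _) h2.
Qed.
Lemma join_mono x y x' y' : le x x' -> le y y' -> le (join x y) (join x' y').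
Proof.
move=> h1 h2; apply: join_le; first exact: le_trans h1 (join_gel _ _).
exact: le_trans h2 (join_ger _ _).
Qed.
Lemma le_complE x y : le x y <-> meet x (neg y) = zero n.
Proof.
split=> h.
  apply: le0_eq; rewrite -(meetN y); apply: meet_mono => //; exact: le_refl.
by rewrite /le -{1}(meet1 x) -(joinN y) meetUr h join0.
Qed.
Lemma disj_le_neg x y : meet x y = zero n -> le x (neg y).
Proof. by move=> h; rewrite /le -{1}(meet1 x) -(joinN y) meetUr h joinC join0. Qed.
Lemma neg_anti x y : le x y -> le (neg y) (neg x).
Proof.
move=> h; apply: disj_le_neg; apply: le0_eq; rewrite -(meetN y) meetC.
by apply: meet_mono => //; exact: le_refl.
Qed.
Lemma split_le x y z : le (meet x y) z -> le (meet x (neg y)) z -> le x z.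
Proof.
move=> h1 h2.
have ex : join (meet x y) (meet x (neg y)) = x by rewrite -meetUr joinN meet1.
rewrite -ex; exact: join_le.
Qed.
Lemma zero_split x y : meet x y = zero n -> meet x (neg y) = zero n -> x = zero n.
Proof.
move=> h1 h2; apply: le0_eq; apply: (split_le (y:=y)); rewrite ?h1 ?h2; exact: le_refl.
Qed.
End Bool.

Lemma cast_sub p q (e : p = q) k (b : 'I_k -> 'I_p) (x : car L k) :
  ecast i (car L i) e (sub b x) = sub (fun j => cast_ord e (b j)) x.
Proof. by case: q / e; congr sub; apply: funext => j; rewrite cast_ord_id. Qed.

Lemma cast_ex p q (e : p = q) (Y : car L p.+1) :
  ecast i (car L i) e (ex Y) = ex (ecast i (car L i) (congr1 S e) Y).
Proof. by case: q / e. Qed.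

Definition liftf k m (a : 'I_k -> 'I_m) : 'I_k.+1 -> 'I_m.+1 :=
  fun j => match unlift ord_max j with Some j' => cyl (a j') | None => ord_max end.

Lemma ex_sub k m (a : 'I_k -> 'I_m) (r : car L k.+1) :
  ex (sub (liftf a) r) = sub a (ex r).
Proof.
have := @A10 m 1 (fun _ : 'I_1 => k) (fun _ => a) (fun _ => r).
rewrite /bigmeet !big_ord_recl !big_ord0.
rewrite !meet1 /= cast_ex !cast_sub => <-.
congr ex; congr sub; apply: funext => j; apply: val_inj.
rewrite /beta10 /liftf; case: unliftP => [j'|] _ /=; by rewrite ?addn0.
Qed.

Lemma sub0 n k (a : 'I_n -> 'I_k) : sub a (zero n) = zero k. Proof. by case: (A2 a (zero n) (zero n)). Qed.
Lemma sub1 n k (a : 'I_n -> 'I_k) : sub a (one n) = one k. Proof. by case: (A2 a (zero n) (zero n)) => _ []. Qed.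
Lemma subJ n k (a : 'I_n -> 'I_k) (x y : car L n) : sub a (join x y) = join (sub a x) (sub a y).
Proof. by case: (A2 a x y) => _ [] _ []. Qed.
Lemma subM n k (a : 'I_n -> 'I_k) (x y : car L n) : sub a (meet x y) = meet (sub a x) (sub a y).
Proof. by case: (A2 a x y) => _ [] _ []. Qed.
Lemma subN n k (a : 'I_n -> 'I_k) (x : car L n) : sub a (neg x) = neg (sub a x).
Proof. exact: A5. Qed.
Lemma subC k n m (a : 'I_k -> 'I_n) (b : 'I_n -> 'I_m) (r : car L k) :
  sub b (sub a r) = sub (fun i => b (a i)) r.
Proof. by rewrite (A3 a b). Qed.
Lemma subI n (x : car L n) : sub (fun i => i) x = x. Proof. exact: A4. Qed.
Lemma sub_ext n k (a b : 'I_n -> 'I_k) (x : car L n) : (forall i, a i = b i) -> sub a x = sub b x.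
Proof. by move=> h; congr sub; apply: funext. Qed.
Lemma sub_le n k (a : 'I_n -> 'I_k) (x y : car L n) : le x y -> le (sub a x) (sub a y).
Proof. by rewrite /le => h; rewrite -subM -h. Qed.

Lemma ex0 n : ex (zero n.+1) = zero n. Proof. by case: (A7 (zero n.+1) (zero n.+1)). Qed.
Lemma ex_le n (x y : car L n.+1) : le x y -> ex x = meet (ex x) (ex y).
Proof.
move=> h; have -> : ex y = join (ex x) (ex (meet y (neg x))).
  case: (A7 x (meet y (neg x))) => _ <-; congr ex.
  by rewrite /le in h; rewrite -{1}(meet1 y) -(joinN x) meetUr (meetC y x) -h.
by rewrite meetKU.
Qed.
Lemma ex_zero n (x : car L n.+1) : x = zero n.+1 -> ex x = zero n.
Proof. by move->; apply: ex0. Qed.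
Lemma ex_nz n (x : car L n.+1) : ex x = zero n -> x = zero n.+1.
Proof.
move=> h; have := A8 x; rewrite /le h sub0 => ->.
by rewrite meetC meet0.
Qed.

Definition catf T m n (u : 'I_m -> T) (v : 'I_n -> T) : 'I_(m + n) -> T :=
  fun j => match split j with inl i => u i | inr i => v i end.
Lemma catf_l T m n (u : 'I_m -> T) (v : 'I_n -> T) i : catf u v (lshift n i) = u i.
Proof. by rewrite /catf (unsplitK (inl i)). Qed.
Lemma catf_r T m n (u : 'I_m -> T) (v : 'I_n -> T) i : catf u v (rshift m i) = v i.
Proof. by rewrite /catf (unsplitK (inr i)). Qed.
Lemma catf_ind T m n (u : 'I_m -> T) (v : 'I_n -> T) (P : T -> Prop) j :
  (forall i, P (u i)) -> (forall i, P (v i)) -> P (catf u v j).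
Proof. by rewrite /catf; case: (split j). Qed.

Definition ext' T n (x : 'I_n -> T) (y : T) : 'I_n.+1 -> T :=
  fun i => match unlift ord_max i with Some j => x j | None => y end.
Lemma cyl_lift n (j : 'I_n) : cyl j = lift ord_max j.
Proof. by apply: ord_inj; rewrite lift_max. Qed.
Lemma ext_cyl T n (x : 'I_n -> T) y j : ext' x y (cyl j) = x j.
Proof. by rewrite /ext' cyl_lift liftK. Qed.
Lemma ext_max T n (x : 'I_n -> T) y : ext' x y ord_max = y.
Proof. by rewrite /ext' unlift_none. Qed.

Section Henkin.
Hypothesis TV : forall x : car L 0, x = zero 0 \/ x = one 0.
Hypothesis NZ : forall m, one m <> zero m.

Inductive term : Type := Hk (n : nat) (a : car L n.+1) (w : 'I_n -> term).

Fixpoint height (t : term) : nat :=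
  match t with Hk n a w => (\max_(j < n) height (w j)).+1 end.

Lemma height_lt n a (w : 'I_n -> term) j : height (w j) < height (Hk a w).
Proof. by rewrite /= ltnS; apply: (@leq_bigmax _ (fun j => height (w j)) j). Qed.

Definition kap m (u : 'I_m -> term) (j : 'I_m) : 'I_m :=
  [arg min_(i < j | `[< u i = u j >]) (i : nat)].

Lemma kap_spec m (u : 'I_m -> term) j :
  u (kap u j) = u j /\ forall i, u i = u j -> kap u j <= i.
Proof.
rewrite /kap; case: arg_minnP; first exact/asboolP.
by move=> i /asboolP hi hmin; split => // i' hi'; apply: hmin; apply/asboolP.
Qed.
Lemma kapP m (u : 'I_m -> term) j : u (kap u j) = u j.
Proof. by case: (kap_spec u j). Qed.
Lemma kap_char m (u : 'I_m -> term) j i :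
  u i = u j -> (forall i', u i' = u j -> i <= i') -> kap u j = i.
Proof.
move=> h1 h2; case: (kap_spec u j) => k1 k2; apply: ord_inj; apply/eqP.
by rewrite eqn_leq k2 // h2.
Qed.
Lemma kap_eq m (u : 'I_m -> term) j1 j2 : u j1 = u j2 -> kap u j1 = kap u j2.
Proof.
move=> e; case: (kap_spec u j2) => k1 k2; apply: kap_char; first by rewrite k1.
by move=> i' hi'; apply: k2; rewrite hi'.
Qed.

Lemma K m m' (u : 'I_m -> term) (u' : 'I_m' -> term) (s : 'I_m' -> 'I_m)
  (hs : forall j, u' j = u (s j)) (x : car L m') :
  sub (kap u) (sub s x) = zero m <-> sub (kap u') x = zero m'.
Proof.
rewrite subC; split => h.
- move: u' s hs x h; case: m' => [|m'] u' s hs x h.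
  + case: (TV x) => ex; first by rewrite ex sub0.
    by exfalso; rewrite ex sub1 in h; exact: NZ h.
  + pose pi (i : 'I_m) : 'I_m'.+1 := kap u' (odflt ord0 [pick j | kap u (s j) == i]).
    have e : forall j, kap u' j = pi (kap u (s j)).
      move=> j; rewrite /pi; case: pickP => [j'' /eqP hj|]; last by move/(_ j); rewrite eqxx.
      by apply: kap_eq; rewrite !hs -(kapP u (s j)) -hj kapP.
    by rewrite (sub_ext _ e) -subC h sub0.
- pose pi (i : 'I_m') := kap u (s i).
  have e : forall j, kap u (s j) = pi (kap u' j).
    by move=> j; rewrite /pi; apply: kap_eq; rewrite -!hs kapP.
  by rewrite (sub_ext _ e) -subC h sub0.
Qed.

Record fm := Fm { fn : nat; fa : car L fn; fw : 'I_fn -> term }.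
Arguments fa : clear implicits.
Arguments fw : clear implicits.

Definition null F := sub (kap (fw F)) (fa F) = zero (fn F).
Definition pulls F m (u : 'I_m -> term) (x : car L m) :=
  exists s : 'I_(fn F) -> 'I_m, (forall j, fw F j = u (s j)) /\ x = sub s (fa F).
Definition N m (u : 'I_m -> term) (x : car L m) := sub (kap u) x.

Lemma null_pull F m (u : 'I_m -> term) x : pulls F u x -> (null F <-> N u x = zero m).
Proof. by case=> s [hs ->]; rewrite /null /N; apply: iff_sym; apply: K. Qed.

Definition emp T (i : 'I_0) : T. Proof. by case: i. Defined.

Definition fand F G := Fm (meet (sub (@lshift (fn F) (fn G)) (fa F)) (sub (@rshift (fn F) (fn G)) (fa G)))
  (catf (fw F) (fw G)).
Definition fneg F := Fm (neg (fa F)) (fw F).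
Definition ftop := Fm (one 0) (@emp term).
Definition fle F G := null (fand F (fneg G)).

Lemma pulls_self F : pulls F (fw F) (fa F).
Proof. by exists (fun j => j); split => //; rewrite subI. Qed.
Lemma pulls_tr F m m' (u : 'I_m -> term) (u' : 'I_m' -> term) (s : 'I_m' -> 'I_m) x :
  (forall j, u' j = u (s j)) -> pulls F u' x -> pulls F u (sub s x).
Proof.
move=> hs [t [ht ->]]; exists (fun j => s (t j)); split; last by rewrite subC.
by move=> j; rewrite ht hs.
Qed.
Lemma pulls_and F G m (u : 'I_m -> term) x y :
  pulls F u x -> pulls G u y -> pulls (fand F G) u (meet x y).
Proof.
move=> [s [hs ->]] [t [ht ->]]; exists (catf s t); split.
  by move=> j; rewrite /= /catf; case: (split j) => i /=; [exact: hs | exact: ht].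
rewrite /= subM !subC; congr meet; symmetry; apply: sub_ext => i; [exact: catf_l | exact: catf_r].
Qed.
Lemma pulls_neg F m (u : 'I_m -> term) x : pulls F u x -> pulls (fneg F) u (neg x).
Proof. by move=> [s [hs ->]]; exists s; split => //; rewrite subN. Qed.
Lemma pulls_top m (u : 'I_m -> term) : pulls ftop u (one m).
Proof. by exists (@emp _); split; [case | rewrite /= sub1]. Qed.
Lemma pL F m n (u : 'I_m -> term) (v : 'I_n -> term) x :
  pulls F u x -> pulls F (catf u v) (sub (@lshift m n) x).
Proof. by apply: pulls_tr => j; rewrite catf_l. Qed.
Lemma pR F m n (u : 'I_m -> term) (v : 'I_n -> term) x :
  pulls F v x -> pulls F (catf u v) (sub (@rshift m n) x).
Proof. by apply: pulls_tr => j; rewrite catf_r. Qed.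

Lemma NM m (u : 'I_m -> term) x y : N u (meet x y) = meet (N u x) (N u y).
Proof. exact: subM. Qed.
Lemma NN m (u : 'I_m -> term) x : N u (neg x) = neg (N u x).
Proof. exact: subN. Qed.
Lemma N1 m (u : 'I_m -> term) : N u (one m) = one m.
Proof. exact: sub1. Qed.

Lemma fle_pull F G m (u : 'I_m -> term) x y :
  pulls F u x -> pulls G u y -> (fle F G <-> le (N u x) (N u y)).
Proof.
move=> hF hG; rewrite /fle (null_pull (pulls_and hF (pulls_neg hG))) NM NN.
by apply: iff_sym; apply: le_complE.
Qed.

Lemma fle_refl F : fle F F.
Proof. rewrite (fle_pull (pulls_self F) (pulls_self F)); exact: le_refl. Qed.

Lemma fle_trans F G H : fle F G -> fle G H -> fle F H.
Proof.
have hF := pL (fw H) (pL (fw G) (pulls_self F)).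
have hG := pL (fw H) (pR (fw F) (pulls_self G)).
have hH := pR (catf (fw F) (fw G)) (pulls_self H).
rewrite (fle_pull hF hG) (fle_pull hG hH) (fle_pull hF hH); exact: le_trans.
Qed.

Lemma fand_lel F G : fle (fand F G) F.
Proof.
have hF := pL (fw G) (pulls_self F).
have hG := pR (fw F) (pulls_self G).
rewrite (fle_pull (pulls_and hF hG) hF) NM; exact: meet_lel.
Qed.
Lemma fand_ler F G : fle (fand F G) G.
Proof.
have hF := pL (fw G) (pulls_self F).
have hG := pR (fw F) (pulls_self G).
rewrite (fle_pull (pulls_and hF hG) hG) NM; exact: meet_ler.
Qed.
Lemma fand_glb H F G : fle H F -> fle H G -> fle H (fand F G).
Proof.
have hF := pL (fw G) (pR (fw H) (pulls_self F)).
have hG := pR (catf (fw H) (fw F)) (pulls_self G).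
have hH := pL (fw G) (pL (fw F) (pulls_self H)).
rewrite (fle_pull hH hF) (fle_pull hH hG) (fle_pull hH (pulls_and hF hG)) NM.
exact: le_meet.
Qed.
Lemma fle_top F : fle F ftop.
Proof. rewrite (fle_pull (pulls_self F) (pulls_top _)) N1; exact: le1. Qed.
Lemma null_fle F G : fle F G -> null G -> null F.
Proof.
have hF := pL (fw G) (pulls_self F).
have hG := pR (fw F) (pulls_self G).
rewrite (fle_pull hF hG) (null_pull hF) (null_pull hG) => h e.
by apply: le0_eq; rewrite -e.
Qed.
Lemma null_fle0 F G : null F -> fle F G.
Proof.
have hF := pL (fw G) (pulls_self F).
have hG := pR (fw F) (pulls_self G).
rewrite (fle_pull hF hG) (null_pull hF) => ->; exact: le0.
Qed.
Lemma fle_split F G H : fle (fand F G) H -> fle (fand F (fneg G)) H -> fle F H.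
Proof.
have hF := pL (fw H) (pL (fw G) (pulls_self F)).
have hG := pL (fw H) (pR (fw F) (pulls_self G)).
have hH := pR (catf (fw F) (fw G)) (pulls_self H).
rewrite (fle_pull (pulls_and hF hG) hH) (fle_pull (pulls_and hF (pulls_neg hG)) hH).
rewrite (fle_pull hF hH) !NM NN; exact: split_le.
Qed.
Lemma null_cut G G' F : null (fand G F) -> null (fand G' (fneg F)) -> null (fand G G').
Proof.
have hG := pL (fw F) (pL (fw G') (pulls_self G)).
have hG' := pL (fw F) (pR (fw G) (pulls_self G')).
have hF := pR (catf (fw G) (fw G')) (pulls_self F).
rewrite (null_pull (pulls_and hG hF)) (null_pull (pulls_and hG' (pulls_neg hF))).
rewrite (null_pull (pulls_and hG hG')) !NM NN => h1 h2.
apply: (zero_split (y := N (catf (catf (fw G) (fw G')) (fw F)) (sub (@rshift _ _) (fa F)))).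
  apply: le0_eq; rewrite -h1 -meetA; apply: meet_mono; first exact: le_refl.
  exact: meet_ler.
apply: le0_eq; rewrite -h2; apply: meet_mono; first exact: meet_ler.
exact: le_refl.
Qed.
Lemma null_contra F : null (fand F (fneg F)).
Proof.
rewrite (null_pull (pulls_and (pulls_self F) (pulls_neg (pulls_self F)))) NM NN.
exact: meetN.
Qed.
Definition hax n (a : car L n.+1) (w : 'I_n -> term) : fm :=
  fneg (fand (Fm (ex a) w) (fneg (Fm a (ext' w (Hk a w))))).

Lemma liftf_max k m (a : 'I_k -> 'I_m) : liftf a ord_max = ord_max.
Proof. by rewrite /liftf unlift_none. Qed.
Lemma liftf_cyl k m (a : 'I_k -> 'I_m) j : liftf a (cyl j) = cyl (a j).
Proof. by rewrite /liftf cyl_lift liftK. Qed.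
Lemma cyl_cases n (j : 'I_n.+1) : j = ord_max \/ exists j', j = cyl j'.
Proof. by case: (unliftP ord_max j) => [j'|] ->; [right; exists j'; rewrite cyl_lift | left]. Qed.

Lemma kap_ext m (u : 'I_m -> term) c : (forall i, u i <> c) ->
  forall j, kap (ext' u c) j = liftf (kap u) j.
Proof.
move=> fr j; apply: kap_char.
- case: (cyl_cases j) => [->|[j' ->]]; first by rewrite liftf_max.
  by rewrite liftf_cyl !ext_cyl kapP.
- case: (cyl_cases j) => [->|[j' ->]] i'.
  + rewrite liftf_max ext_max.
    case: (cyl_cases i') => [->|[i'' ->]]; first by rewrite leqnn.
    by rewrite ext_cyl => e; exfalso; apply: (fr i'').
  + rewrite liftf_cyl ext_cyl.
    case: (cyl_cases i') => [->|[i'' ->]].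
      by rewrite ext_max => e; exfalso; apply: (fr j'); rewrite e.
    rewrite ext_cyl => e /=; by case: (kap_spec u j') => _ /(_ _ e).
Qed.

Lemma henkin_step G n (a : car L n.+1) (w : 'I_n -> term) :
  (forall j, fw G j <> Hk a w) -> (forall j, w j <> Hk a w) ->
  ~ null G -> ~ null (fand (hax a w) G).
Proof.
move=> frG frw nG hnull; apply: nG.
set c := Hk a w in frG frw hnull.
pose u := catf (fw G) w.
have fr : forall i, u i <> c by move=> i; apply: (catf_ind (P := fun v => v <> c)).
pose ue := ext' u c.
have hcyl : forall j, u j = ue (cyl j) by move=> j; rewrite /ue ext_cyl.
have hGu := pL w (pulls_self G).
set g := sub _ (fa G) in hGu.
have hGe := pulls_tr hcyl hGu.
have hEu := pR (fw G) (pulls_self (Fm (ex a) w)).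
set e := sub _ (ex a) in hEu.
have hEe := pulls_tr hcyl hEu.
have hS : pulls (Fm a (ext' w c)) ue (sub (liftf (@rshift (fn G) n)) a).
  exists (liftf (@rshift (fn G) n)); split => // j /=.
  case: (cyl_cases j) => [->|[j' ->]]; first by rewrite liftf_max /ue !ext_max.
  by rewrite liftf_cyl /ue !ext_cyl /u catf_r.
set s := sub _ a in hS.
have hH := pulls_neg (pulls_and hEe (pulls_neg hS)).
rewrite (null_pull (pulls_and hH hGe)) in hnull.
rewrite (null_pull hGu).
have k : forall X, N ue X = sub (liftf (kap u)) X by move=> X; apply: sub_ext; apply: kap_ext.
have h2 : N u (meet g (neg e)) = zero _.
  rewrite /N -(K hcyl) subM subN; apply: le0_eq; rewrite -hnull; apply: sub_le.
  rewrite meetC; apply: meet_mono; last exact: le_refl.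
  apply: neg_anti; exact: meet_lel.
have h1 : N u (meet e g) = zero _.
  have : N ue (meet (sub (@cyl _) g) s) = zero _.
    apply: le0_eq; rewrite -hnull; apply: sub_le; rewrite meetC.
    apply: meet_mono; last exact: le_refl.
    apply: disj_le_neg; rewrite meetC -meetA (meetC (neg s)) meetN.
    by rewrite meetC meet0.
  rewrite k => /ex_zero; rewrite ex_sub meetC A9 /s ex_sub; exact.
apply: (zero_split (y := N u e)); first by rewrite -NM meetC.
by rewrite -NN -NM.
Qed.

Definition trip := {n : nat & (car L n.+1 * ('I_n -> term))%type}.
Definition htrip (t : trip) : fm := let: existT n (a, w) := t in hax a w.
Definition ctr (t : trip) : term := let: existT n (a, w) := t in Hk a w.
Definition untk (v : term) : trip := let: Hk n a w := v in existT _ n (a, w).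
Lemma ctrK t : untk (ctr t) = t. Proof. by case: t => n [a w]. Qed.

Fixpoint inl (t : trip) (l : seq trip) : Prop :=
  if l is t' :: l' then t = t' \/ inl t l' else False.
Fixpoint conjH (l : seq trip) : fm :=
  if l is t :: l' then fand (htrip t) (conjH l') else ftop.

Lemma conjH_mem l t : inl t l -> fle (conjH l) (htrip t).
Proof.
elim: l => //= t' l IH [<-|h]; first exact: fand_lel.
exact: fle_trans (fand_ler _ _) (IH h).
Qed.
Lemma conjH_sub l1 l2 : (forall t, inl t l1 -> inl t l2) -> fle (conjH l2) (conjH l1).
Proof.
elim: l1 => [|t l1 IH] h /=; first exact: fle_top.
apply: fand_glb; first by apply: conjH_mem; apply: h; left.
by apply: IH => t' ht'; apply: h; right.
Qed.

Lemma conjH_vars l j : exists t, inl t l /\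
  (fw (conjH l) j = ctr t \/ height (fw (conjH l) j) < height (ctr t)).
Proof.
elim: l j => [|t l IH] j /=; first by case: j.
rewrite /fand /=.
apply: (catf_ind (P := fun v => exists t', (t' = t \/ inl t' l) /\
   (v = ctr t' \/ height v < height (ctr t')))); last first.
  by move=> i; case: (IH i) => t' [h1 h2]; exists t'; split => //; right.
move=> i; clear j; exists t; split; first by left.
case: t i => n [a w] i /=.
apply: (catf_ind (P := fun v => v = Hk a w \/ height v < height (Hk a w))).
  by move=> i'; right; apply: height_lt.
move=> i'; rewrite /ext'; case: (unlift ord_max i') => [i''|]; last by left.
by right; apply: height_lt.
Qed.

Lemma max_trip t0 l0 : exists t, inl t (t0 :: l0) /\
  forall t', inl t' (t0 :: l0) -> height (ctr t') <= height (ctr t).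
Proof.
elim: l0 t0 => [|t1 l IH] t0.
  by exists t0; split; [left | move=> t' [->|]].
case: (IH t1) => tm [tin tmax].
case: (leqP (height (ctr t0)) (height (ctr tm))) => h.
  exists tm; split; first by right.
  by move=> t' [->|ht']; [ | apply: tmax].
exists t0; split; first by left.
move=> t' [->|ht']; first exact: leqnn.
by apply: leq_trans (tmax _ ht') (ltnW h).
Qed.

Fixpoint rm (t : trip) (l : seq trip) : seq trip :=
  if l is t' :: l' then (if `[< t' = t >] then rm t l' else t' :: rm t l') else [::].
Lemma rm_size_le t l : size (rm t l) <= size l.
Proof. by elim: l => //= x s IHs; case: asboolP => _ //=; exact: leqW. Qed.
Lemma rm_size t l : inl t l -> size (rm t l) < size l.
Proof.
elim: l => //= t' l IH h; case: asboolP => [_|ne].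
  exact: leq_ltn_trans (rm_size_le t l) (ltnSn _).
case: h => [e|h]; first by exfalso; apply: ne.
by rewrite /= ltnS; exact: IH.
Qed.
Lemma rm_mem t t' l : inl t' l -> t' = t \/ inl t' (rm t l).
Proof.
elim: l => //= x l IH [e|h].
  by case: asboolP => [ex|nx]; [left; rewrite e | right; left].
by case: (IH h) => [|h']; [left | right; case: asboolP => _ //=; right].
Qed.
Lemma rm_mem2 t t' l : inl t' (rm t l) -> inl t' l /\ t' <> t.
Proof.
elim: l => //= x l IH; case: asboolP => [ex|nx] h.
  by case: (IH h) => h1 h2; split => //; right.
case: h => [e|h]; first by split; [left | rewrite e].
by case: (IH h) => h1 h2; split => //; right.
Qed.

Lemma henkin_trip G t : (forall j, fw G j <> ctr t) -> ~ null G -> ~ null (fand (htrip t) G).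
Proof.
case: t => n [a w] /= frG; apply: henkin_step => // j e.
by have := height_lt a w j; rewrite e ltnn.
Qed.

Lemma conjH_ok l : ~ null (conjH l).
Proof.
move: {2}(size l).+1 (ltnSn (size l)) => k; elim: k l => // k IH l hl.
case: l hl => [|t0 l0] hl.
  by rewrite /null /= sub1; apply: NZ.
case: (max_trip t0 l0) => t [tin tmax].
have hl' : size (rm t (t0 :: l0)) < k.
  by apply: leq_trans (rm_size tin) _; rewrite -ltnS.
have nn := IH _ hl'.
have step : ~ null (fand (htrip t) (conjH (rm t (t0 :: l0)))).
  apply: henkin_trip => // j e.
  case: (conjH_vars j) => t' [/rm_mem2 [h1 h2] [h3|h3]].
    by apply: h2; rewrite -(ctrK t') -h3 e ctrK.
  by have := leq_trans h3 (tmax _ h1); rewrite e ltnn.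
move=> hn; apply: step; apply: null_fle hn.
apply: (@conjH_sub _ (t :: rm t (t0 :: l0))) => t' ht' /=.
by case: (rm_mem t ht') => h; [left | right].
Qed.
Definition hset (X : fm) := exists l, fle (conjH l) X.
Definition isF (S : fm -> Prop) :=
  [/\ (forall F G, S F -> fle F G -> S G), (forall F G, S F -> S G -> S (fand F G)),
      (forall F, S F -> ~ null F) & (forall X, hset X -> S X)].

Lemma conjH_cat l1 l2 : fle (conjH (l1 ++ l2)) (fand (conjH l1) (conjH l2)).
Proof.
have mem : forall t l l', inl t l \/ inl t l' -> inl t (l ++ l').
  move=> t; elim=> [|x l IH] l' /=; first by case.
  case=> [[->|h]|h]; [by left | by right; apply: IH; left | by right; apply: IH; right].
apply: fand_glb; apply: conjH_sub => t h; apply: mem; [left | right] => //.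
Qed.

Lemma hset_isF : isF hset.
Proof.
split.
- by move=> F G [l hl] h; exists l; apply: fle_trans hl h.
- move=> F G [l1 h1] [l2 h2]; exists (l1 ++ l2); apply: fle_trans (conjH_cat l1 l2) _.
  apply: fand_glb; [apply: fle_trans (fand_lel _ _) h1 | apply: fle_trans (fand_ler _ _) h2].
- by move=> F [l hl] nF; apply: (conjH_ok (l := l)); apply: null_fle hl nF.
- by [].
Qed.

Lemma zorn_sets T (P : (T -> Prop) -> Prop) :
  (forall F : (T -> Prop) -> Prop, (forall X, F X -> P X) ->
     (forall A B, F A -> F B -> (forall t, A t -> B t) \/ (forall t, B t -> A t)) ->
     P (fun a => exists2 X, F X & X a)) ->
  exists A, P A /\ forall B, (forall t, A t -> B t) -> ~ (forall t, B t -> A t) -> ~ P B.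
Proof.
move=> h; case: (@classical_sets.Zorn_bigcup T P h) => A [PA HA].
by exists A; split => // B h1 h2; apply: HA; split.
Qed.

Lemma maxfilter : exists M, isF M /\ forall F, M F \/ M (fneg F).
Proof.
pose P (S : fm -> Prop) := isF (fun X => hset X \/ S X).
have [A [PA HA]] : exists A, P A /\ forall B, (forall t, A t -> B t) -> ~ (forall t, B t -> A t) -> ~ P B.
  apply: zorn_sets => Fs FP Ftot.
  have [H1 H2 H3 H4] := hset_isF.
  split.
  - move=> F G [hF|[Y FY YF]] hFG; first by left; apply: H1 hFG.
    by case: (FP Y FY) => K1 _ _ _; case: (K1 F G (or_intror YF) hFG) => h; [left | right; exists Y].
  - move=> F G [hF|[Y FY YF]] [hG|[Z FZ ZG]]; first by left; apply: H2.
    + by case: (FP Z FZ) => _ K2 _ _; case: (K2 F G (or_introl hF) (or_intror ZG)) => h; [left|right; exists Z].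
    + by case: (FP Y FY) => _ K2 _ _; case: (K2 F G (or_intror YF) (or_introl hG)) => h; [left|right; exists Y].
    + case: (Ftot Y Z FY FZ) => sub.
        by case: (FP Z FZ) => _ K2 _ _; case: (K2 F G (or_intror (sub _ YF)) (or_intror ZG)) => h; [left|right; exists Z].
      by case: (FP Y FY) => _ K2 _ _; case: (K2 F G (or_intror YF) (or_intror (sub _ ZG))) => h; [left|right; exists Y].
  - move=> F [hF|[Y FY YF]]; first exact: H3.
    by case: (FP Y FY) => _ _ K3 _; apply: K3; right.
  - by move=> X hX; left.
pose M X := hset X \/ A X.
have [M1 M2 M3 M4] : isF M := PA.
have Mtop : M ftop by apply: M4; exists [::]; exact: fle_refl.
have ext : forall F, ~ M F -> exists G, M G /\ null (fand G F).
  move=> F nMF; apply: contrapT => hno.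
  pose B X := exists G, M G /\ fle (fand G F) X.
  apply: (HA B).
  - by move=> X AX; exists X; split; [right | exact: fand_lel].
  - move=> h; apply: nMF; right; apply: h; exists ftop; split => //; exact: fand_ler.
  split.
  + move=> X Y [hX|[G [MG hG]]] hXY.
      by right; exists X; split; [left | apply: fle_trans (fand_lel _ _) hXY].
    by right; exists G; split => //; apply: fle_trans hG hXY.
  + have toB : forall X, hset X \/ B X -> B X.
      by move=> X [hX|//]; exists X; split; [left | exact: fand_lel].
    move=> X Y /toB [G [MG hG]] /toB [G' [MG' hG']]; right.
    exists (fand G G'); split; first exact: M2.
    apply: fand_glb.
      apply: fle_trans hG; apply: fand_glb; last exact: fand_ler.
      exact: fle_trans (fand_lel _ _) (fand_lel _ _).
    apply: fle_trans hG'; apply: fand_glb; last exact: fand_ler.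
    exact: fle_trans (fand_lel _ _) (fand_ler _ _).
  + move=> X [hX|[G [MG hG]]] nX; first by apply: (M3 X) => //; left.
    by apply: hno; exists G; split => //; apply: null_fle hG nX.
  + by move=> X hX; left.
exists M; split; first by split.
move=> F; apply: contrapT => hn.
have [G [MG nG]] := ext F (fun h => hn (or_introl h)).
have [G' [MG' nG']] := ext (fneg F) (fun h => hn (or_intror h)).
by apply: (M3 _ (M2 _ _ MG MG')); apply: null_cut nG nG'.
Qed.
Lemma same_fle F G m (u : 'I_m -> term) x : pulls F u x -> pulls G u x -> fle F G.
Proof. by move=> hF hG; rewrite (fle_pull hF hG); exact: le_refl. Qed.

Lemma modus E S : fle (fand (fneg (fand E (fneg S))) E) S.
Proof.
have hE := pL (fw S) (pulls_self E).
have hS := pR (fw E) (pulls_self S).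
rewrite (fle_pull (pulls_and (pulls_neg (pulls_and hE (pulls_neg hS))) hE) hS) !NM !NN !NM !NN.
apply/le_complE; rewrite -meetA meetC; exact: meetN.
Qed.

Lemma bool_jn n (r s : car L n) : meet (neg r) (meet (neg s) (join r s)) = zero n.
Proof.
rewrite meetA meetUr; apply: le0_eq; apply: join_le.
  apply: le_trans (meet_mono (meet_lel _ _) (le_refl r)) _.
  by rewrite meetC meetN; exact: le_refl.
apply: le_trans (meet_mono (meet_ler _ _) (le_refl s)) _.
by rewrite meetC meetN; exact: le_refl.
Qed.

Lemma hom_exists : exists f : forall n, car L n -> Defs.rel term n, ishom f.
Proof.
have [M [[M1 M2 M3 M4] Mu]] := maxfilter.
have Mneg : forall F, M (fneg F) <-> ~ M F.
  move=> F; split; last by case: (Mu F).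
  by move=> h1 h2; apply: (M3 _ (M2 _ _ h2 h1)); exact: null_contra.
have Mtop : M ftop by apply: M4; exists [::]; exact: fle_refl.
exists (fun n a w => M (Fm a w)).
have PE : forall (P Q : Prop), (P <-> Q) -> P = Q by move=> P Q; exact: propext.
split; [|split; [|split; [|split; [|split; [|split]]]]].
- move=> n k al r; apply: funext => w; apply: PE; rewrite /subst_rel; split => h; apply: M1 h _.
    by eapply (@same_fle _ _ _ w (sub al r)); [exact: pulls_self | exists al].
  by eapply (@same_fle _ _ _ w (sub al r)); [exists al | exact: pulls_self].
- move=> n; apply: funext => w; apply: PE; split => // h; apply: (M3 _ h).
  by rewrite /null /= sub0.
- move=> n; apply: funext => w; apply: PE; split => // _; apply: M1 Mtop _.
  exact: same_fle (pulls_top w) (pulls_self (Fm (one n) w)).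
- move=> n r s; apply: funext => w; apply: PE; split.
    move=> h; apply: contrapT => hn.
    have hr : M (Fm (neg r) w) by apply/(Mneg (Fm r w)) => h'; apply: hn; left.
    have hs : M (Fm (neg s) w) by apply/(Mneg (Fm s w)) => h'; apply: hn; right.
    apply: (M3 _ (M2 _ _ hr (M2 _ _ hs h))).
    rewrite (null_pull (pulls_and (pulls_self (Fm (neg r) w)) (pulls_and (pulls_self (Fm (neg s) w)) (pulls_self (Fm (join r s) w))))).
    by rewrite /= bool_jn /N sub0.
  case=> h; apply: M1 h _.
    by rewrite (fle_pull (pulls_self (Fm r w)) (pulls_self (Fm (join r s) w))) /=; apply: sub_le; exact: join_gel.
  by rewrite (fle_pull (pulls_self (Fm s w)) (pulls_self (Fm (join r s) w))) /=; apply: sub_le; exact: join_ger.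
- move=> n r s; apply: funext => w; apply: PE; split.
    move=> h; split; apply: M1 h _.
      by rewrite (fle_pull (pulls_self (Fm (meet r s) w)) (pulls_self (Fm r w))) /=; apply: sub_le; exact: meet_lel.
    by rewrite (fle_pull (pulls_self (Fm (meet r s) w)) (pulls_self (Fm s w))) /=; apply: sub_le; exact: meet_ler.
  case=> h1 h2; apply: M1 (M2 _ _ h1 h2) _.
  exact: same_fle (pulls_and (pulls_self (Fm r w)) (pulls_self (Fm s w))) (pulls_self (Fm (meet r s) w)).
- move=> n r; apply: funext => w; apply: PE; exact: (Mneg (Fm r w)).
- move=> n r; apply: funext => w; apply: PE; split.
    move=> h; exists (Hk r w).
    have hH : M (hax r w).
      apply: M4; exists [:: existT _ n (r, w)]; exact: fand_lel.
    exact: M1 (M2 _ _ hH h) (modus _ _).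
  case=> y h; apply: M1 h _.
  have hc : forall j, w j = ext w y (cyl j) by move=> j; exact: (esym (ext_cyl w y j)).
  rewrite (fle_pull (pulls_self (Fm r (ext w y))) (pulls_tr hc (pulls_self (Fm (ex r) w)))) /=.
  apply: sub_le; exact: A8.
Qed.

End Henkin.
Lemma sub_I0 N (a b : 'I_0 -> 'I_N) (x : car L 0) : sub a x = sub b x.
Proof. by apply: sub_ext; case. Qed.

Lemma TV0 (x : car L 0) : x = zero 0 \/ x = one 0.
Proof.
pose s (i : 'I_2) : car L 0 := if val i == 0 then x else neg x.
have := @A0 2 (fun _ => 0) (fun _ => one 0) s.
have big2 : forall p (op : car L p -> car L p -> car L p) idx (F : 'I_2 -> car L p),
  \big[op/idx]_(i < 2) F i = op (F ord0) (op (F (lift ord0 ord0)) idx).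
  by move=> p op idx F; rewrite !big_ord_recl big_ord0.
rewrite /bigmeet /bigjoin !big2 /s /=.
rewrite !sub1 !meet1 join0.
rewrite (sub_I0 (@part_cyl 2 (fun _ => 0) (lift ord0 ord0)) (@part_cyl 2 (fun _ => 0) ord0)).
rewrite -subJ joinN sub1 => /(_ (le_refl _)) [i].
case: i => [[|[|//]]] hi /= h.
  right; apply: le_anti => //; exact: le1.
left; rewrite -(meet1 x) -(meetC (one 0)).
have e : neg x = one 0 by apply: le_anti => //; exact: le1.
by rewrite -e meetC meetN.
Qed.

Lemma NZ0 : one 0 <> zero 0.
Proof.
move=> e.
have := @A0 0 (fun _ => 0) (fun _ => one 0) (fun _ => one 0).
have big0 : forall p (op : car L p -> car L p -> car L p) idx (F : 'I_0 -> car L p),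
  \big[op/idx]_(i < 0) F i = idx by move=> p op idx F; rewrite big_ord0.
rewrite /bigmeet /bigjoin !big0.
have E : @Defs.one L (\sum_(j < 0) 0) = zero _.
  by rewrite -(sub1 (@emp 'I_(\sum_(j < 0) 0))) e sub0.
case; first by rewrite /le E meetxx.
by case.
Qed.

Lemma hom_inj W (f : forall n, car L n -> Defs.rel W n) : ishom f ->
  forall n (r s : car L n), f n r = f n s -> r = s.
Proof.
case=> Hsub [H0 [H1 [HJ [HM [HN HE]]]]].
have real : forall n (a : car L n), a <> zero n -> exists w, f n a w.
  elim=> [|n IH] a na.
    case: (TV0 a) => e //; exists (@emp W); by rewrite e H1.
  have : ex a <> zero n by move/ex_nz.
  by move/IH => [w]; rewrite HE => [[y hy]]; exists (ext w y).
have h : forall n (r s : car L n), f n r = f n s -> meet r (neg s) = zero n.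
  move=> n r s e; apply: contrapT => nz; case: (real _ _ nz) => w.
  by rewrite HM HN /= e; case.
move=> n r s e; apply: le_anti; apply/le_complE; apply: h => //.
Qed.

Lemma neg0 : neg (zero 0) = one 0.
Proof. by have := joinN (zero 0); rewrite joinC join0. Qed.
Lemma neg1 : neg (one 0) = zero 0.
Proof. by have := meetN (one 0); rewrite meetC meet1. Qed.

Lemma degenerate : one 1 = zero 1 -> exists f : forall n, car L n -> Defs.rel False n, ishom f.
Proof.
move=> D.
exists (fun n a w => a = one n).
have PE : forall (P Q : Prop), (P <-> Q) -> P = Q by move=> P Q; exact: propext.
have N10 := NZ0.
split; [|split; [|split; [|split; [|split; [|split]]]]].
- move=> n k al r; apply: funext => w; apply: PE; rewrite /subst_rel.
  case: k al w => [|k] al w; last by case: (w ord0).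
  case: n al r => [|n] al r; last by case: (al ord0).
  by rewrite (sub_I0 al (fun i => i)) subI.
- move=> n; apply: funext => w; apply: PE; split => // h.
  by case: n w h => [|n] w h; [apply: N10 | case: (w ord0)].
- by move=> n; apply: funext => w; apply: PE.
- move=> n r s; apply: funext => w; apply: PE.
  case: n w r s => [|n] w r s; last by case: (w ord0).
  split.
    case: (TV0 r) => ->; last by left.
    by rewrite joinC join0; right.
  have up : forall x : car L 0, le (one 0) x -> x = one 0 by move=> x h; apply: le_anti => //; exact: le1.
  by case=> ->; apply: up; [exact: join_gel | exact: join_ger].
- move=> n r s; apply: funext => w; apply: PE.
  case: n w r s => [|n] w r s; last by case: (w ord0).
  have up : forall x : car L 0, le (one 0) x -> x = one 0 by move=> x h; apply: le_anti => //; exact: le1.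
  split; last by case=> -> ->; rewrite meetxx.
  move=> e; split; apply: up; rewrite -e; [exact: meet_lel | exact: meet_ler].
- move=> n r; apply: funext => w; apply: PE.
  case: n w r => [|n] w r; last by case: (w ord0).
  case: (TV0 r) => ->; rewrite ?neg0 ?neg1; split => h //.
    by move=> e; apply: N10; rewrite e.
  by exfalso; apply: N10; rewrite h.
- move=> n r; apply: funext => w; apply: PE; rewrite /ex_rel; split; last by case.
  case: n w r => [|n] w r; last by case: (w ord0).
  have -> : r = zero 1 by rewrite -(meet1 r) D meetC meet0.
  by rewrite ex0 => h; exfalso; apply: N10; rewrite h.
Qed.

Lemma hard : represents_in_FO_algebra L.
Proof.
case: (pselect (one 1 = zero 1)) => D.
  have [f hf] := degenerate D.
  by exists False, f; split => //; exact: hom_inj.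
have NZ : forall m, one m <> zero m.
  case=> [|m] e; first exact: NZ0.
  apply: D; have := f_equal (sub (fun _ : 'I_m.+1 => (ord0 : 'I_1))) e.
  by rewrite sub1 sub0.
have [f hf] := hom_exists TV0 NZ.
by exists term, f; split => //; exact: hom_inj.
Qed.

End Hard.

Unset Implicit Arguments.
Section Easy.
Variables (L : msalg) (W : Type) (f : forall n, car L n -> Defs.rel W n).
Hypothesis Hemb : embeds_into f.
Local Notation one := (@Defs.one L).
Local Notation zero := (@Defs.zero L).

Lemma finj n (r s : car L n) : f n r = f n s -> r = s.
Proof. by move=> e; case: Hemb => h _; exact: (h n r s e). Qed.
Lemma fsub n k (a : 'I_n -> 'I_k) (r : car L n) w : f k (sub a r) w = f n r (fun i => w (a i)).
Proof. by case: Hemb => _ [-> _]. Qed.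
Lemma f0 n w : f n (zero n) w = False.
Proof. by case: Hemb => _ [_ [-> _]]. Qed.
Lemma f1 n w : f n (one n) w = True.
Proof. by case: Hemb => _ [_ [_ [-> _]]]. Qed.
Lemma fJ n (r s : car L n) w : f n (join r s) w = (f n r w \/ f n s w).
Proof. by case: Hemb => _ [_ [_ [_ [-> _]]]]. Qed.
Lemma fM n (r s : car L n) w : f n (meet r s) w = (f n r w /\ f n s w).
Proof. by case: Hemb => _ [_ [_ [_ [_ [-> _]]]]]. Qed.
Lemma fN n (r : car L n) w : f n (neg r) w = ~ f n r w.
Proof. by case: Hemb => _ [_ [_ [_ [_ [_ [-> _]]]]]]. Qed.
Lemma fE n (r : car L n.+1) w : f n (ex r) w = exists y, f n.+1 r (ext w y).
Proof. by case: Hemb => _ [_ [_ [_ [_ [_ [_ ->]]]]]]. Qed.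

Lemma feq n (r s : car L n) : (forall w, f n r w <-> f n s w) -> r = s.
Proof. by move=> h; apply: finj; apply: funext => w; apply: propext. Qed.
Lemma efle n (r s : car L n) : (forall w, f n r w -> f n s w) -> le r s.
Proof. by move=> h; apply: feq => w; rewrite fM; split => [x|[]//]; split => //; apply: h. Qed.
Lemma efle_inv n (r s : car L n) : le r s -> forall w, f n r w -> f n s w.
Proof. by rewrite /le => e w; rewrite {1}e fM; case. Qed.

Lemma e_ax1 : ax1 L.
Proof.
by move=> n x y z; split; [|split; [|split; [|split; [|split; [|split; [|split; [|split]]]]]]];
  apply: feq => w; rewrite ?fJ ?fM ?fJ ?fM ?f0 ?f1; tauto.
Qed.
Lemma e_ax2 : ax2 L.
Proof.
by move=> n k a x y; split; [|split; [|split]]; apply: feq => w;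
  rewrite !fsub ?f0 ?f1 ?fJ ?fM ?fsub.
Qed.
Lemma e_ax3 : ax3 L.
Proof. by move=> k n m a b r; apply: feq => w; rewrite !fsub. Qed.
Lemma e_ax4 : ax4 L.
Proof. by move=> n r; apply: feq => w; rewrite !fsub. Qed.
Lemma e_ax5 : ax5 L.
Proof. by move=> n k a r; apply: feq => w; rewrite fsub !fN fsub. Qed.
Lemma e_ax6 : ax6 L.
Proof.
move=> n r; split; apply: feq => w; rewrite ?fJ ?fM fN ?f0 ?f1; last by tauto.
by split => // _; case: (pselect (f n r w)); [left | right].
Qed.
Lemma e_ax7 : ax7 L.
Proof.
move=> n r s; split; apply: feq => w; rewrite ?fE ?f0 ?fJ ?fE.
  by split => [[y]|//]; rewrite f0.
split; first by case=> y; rewrite fJ => -[h|h]; [left|right]; exists y.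
by case=> -[y h]; exists y; rewrite fJ; [left|right].
Qed.

Lemma ext_cylf n (w : 'I_n -> W) y : (fun j => ext w y (cyl j)) = w.
Proof. by apply: funext => j; rewrite /ext cyl_lift liftK. Qed.
Lemma ext_eta n (w : 'I_n.+1 -> W) : ext (fun j => w (cyl j)) (w ord_max) = w.
Proof.
apply: funext => j; rewrite /ext; case: (unliftP ord_max j) => [j'|] ->.
  by rewrite cyl_lift.
by [].
Qed.

Lemma e_ax8 : ax8 L.
Proof.
move=> n r; apply: efle => w h; rewrite fsub fE.
by exists (w ord_max); rewrite ext_eta.
Qed.
Lemma e_ax9 : ax9 L.
Proof.
move=> n r s; apply: feq => w; rewrite fE fM fE; split.
  by case=> y; rewrite fM fsub ext_cylf => -[h1 h2]; split => //; exists y.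
by case=> -[y h1] h2; exists y; rewrite fM fsub ext_cylf.
Qed.

Lemma f_cast p q (e : p = q) (X : car L p) w :
  f q (ecast i (car L i) e X) w = f p X (fun j => w (cast_ord e j)).
Proof.
move: w; case: q / e => w /=; congr (f _ X); apply: funext => j.
by rewrite cast_ord_id.
Qed.

Lemma catf_lo T m n (u : 'I_m -> T) (v : 'I_n -> T) (j : 'I_(m + n)) (i : 'I_m) :
  j = i :> nat -> catf u v j = u i.
Proof.
move=> h; rewrite /catf; case: splitP => [i' h'|k h'].
  by congr u; apply: ord_inj; rewrite -h' h.
by exfalso; have := ltn_ord i; lia.
Qed.
Lemma catf_hi T m n (u : 'I_m -> T) (v : 'I_n -> T) (j : 'I_(m + n)) (k : 'I_n) :
  j = m + k :> nat -> catf u v j = v k.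
Proof.
move=> h; rewrite /catf; case: splitP => [i' h'|k' h'].
  by exfalso; have := ltn_ord i'; lia.
by congr v; apply: ord_inj; lia.
Qed.
Lemma ext_lo T n (x : 'I_n -> T) y (j : 'I_n.+1) (i : 'I_n) : j = i :> nat -> ext x y j = x i.
Proof.
move=> h; case: (cyl_cases j) => [e|[j' e]]; subst j.
  by exfalso; have := ltn_ord i; rewrite /= in h; lia.
rewrite /ext cyl_lift liftK; congr x; apply: ord_inj; exact: h.
Qed.
Lemma ext_hi T n (x : 'I_n -> T) y (j : 'I_n.+1) : j = n :> nat -> ext x y j = y.
Proof.
move=> h; case: (cyl_cases j) => [e|[j' e]]; subst j.
  by rewrite /ext unlift_none.
by exfalso; have := ltn_ord j'; rewrite /= in h; lia.
Qed.

Lemma key_ext m n (w : 'I_m -> W) (y' : 'I_n -> W) z :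
  (fun j => ext (catf w y') z (cast_ord (addnS m n) j)) = catf w (ext y' z).
Proof.
apply: funext => j.
case: (ltnP ((j : nat)) m) => hj.
  rewrite (catf_lo _ _ _ _ _ _ (Ordinal hj)) //.
  have hj2 : (j : nat) < m + n by lia.
  rewrite (ext_lo _ _ _ _ _ (Ordinal hj2)) //.
  by rewrite (catf_lo _ _ _ _ _ _ (Ordinal hj)).
have hk : (j : nat) - m < n.+1 by have := ltn_ord j; lia.
rewrite (catf_hi _ _ _ _ _ _ (Ordinal hk)) /=; last by lia.
case: (ltnP ((j : nat) - m) n) => hk2.
  rewrite (ext_lo _ _ _ _ _ (Ordinal hk2)) //.
  have hj2 : (j : nat) < m + n by lia.
  rewrite (ext_lo _ _ _ _ _ (Ordinal hj2)) //.
  by rewrite (catf_hi _ _ _ _ _ _ (Ordinal hk2)) //= ; lia.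
have he : (j : nat) - m = n by have := ltn_ord j; lia.
rewrite (ext_hi _ _ y' z (Ordinal hk)) //.
by rewrite (ext_hi _ _ (catf w y') z (cast_ord (addnS m n) j)) //=; have := ltn_ord j; lia.
Qed.

Lemma f_exn m n (X : car L (m + n)) w :
  f m (@exn L m n X) w <-> exists y : 'I_n -> W, f (m + n) X (catf w y).
Proof.
elim: n X => [|n IH] X /=.
  have e : forall y : 'I_0 -> W, catf w y = (fun j => w (cast_ord (addn0 m) j)).
    move=> y; apply: funext => j; have hj : (j : nat) < m by have := ltn_ord j; lia.
    rewrite (catf_lo _ _ _ _ _ _ (Ordinal hj)) //; congr w; exact: ord_inj.
  rewrite f_cast; split; first by move=> h; exists (@emp W); rewrite e.
  by case=> y; rewrite e.
rewrite IH; split.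
  case=> y'; rewrite fE => -[z]; rewrite f_cast key_ext => h.
  by exists (ext y' z).
case=> y h; exists (fun j => y (cyl j)); rewrite fE; exists (y ord_max).
by rewrite f_cast key_ext ext_eta.
Qed.

Lemma f_bigmeet p m (G : 'I_m -> car L p) w :
  f p (bigmeet G) w <-> forall i, f p (G i) w.
Proof.
elim: m G => [|m IH] G; rewrite /bigmeet.
  by rewrite big_ord0 f1; split => // _; case.
rewrite big_ord_recl fM -/(bigmeet _) IH; split.
  case=> h1 h2 i; case: (unliftP ord0 i) => [i'|] ->; [exact: h2 | exact: h1].
by move=> h; split => [|i]; apply: h.
Qed.
Lemma f_bigjoin p m (G : 'I_m -> car L p) w :
  f p (bigjoin G) w <-> exists i, f p (G i) w.
Proof.
elim: m G => [|m IH] G; rewrite /bigjoin.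
  by rewrite big_ord0 f0; split => // -[] [].
rewrite big_ord_recl fJ -/(bigjoin _) IH; split.
  by case=> [h|[i h]]; [exists ord0 | exists (lift ord0 i)].
case=> i; case: (unliftP ord0 i) => [i'|] -> h; [by right; exists i' | by left].
Qed.

Lemma e_ax10 : ax10 L.
Proof.
move=> m n k al r; apply: feq => w; rewrite f_exn f_bigmeet.
have e : forall (y : 'I_n -> W) i, (fun j => catf w y (beta10 (al i) i j)) = ext (fun j => w (al i j)) (y i).
  move=> y i; apply: funext => j; rewrite /beta10 /ext.
  by case: (unlift ord_max j) => [j'|]; [rewrite catf_l | rewrite catf_r].
split.
  case=> y; rewrite f_bigmeet => h i; rewrite fsub fE; exists (y i).
  by have := h i; rewrite fsub e.
move=> h.
have h' : forall i, exists z, f _ (r i) (ext (fun j => w (al i j)) z).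
  by move=> i; have := h i; rewrite fsub fE.
exists (fun i => proj1_sig (cid (h' i))); rewrite f_bigmeet => i.
by rewrite fsub e; exact: (proj2_sig (cid (h' i))).
Qed.

Lemma psum_mono m (k : 'I_m -> nat) (i i' : 'I_m) : i < i' ->
  \sum_(j < m | j < i) k j + k i <= \sum_(j < m | j < i') k j.
Proof.
move=> lt; rewrite [X in _ <= X](bigID (fun j : 'I_m => j < i)) /=.
have -> : \sum_(j < m | (j < i') && (j < i)) k j = \sum_(j < m | j < i) k j.
  apply: eq_bigl => j; apply/andP/idP => [[]//|h]; split => //; exact: ltn_trans h lt.
rewrite leq_add2l (bigD1 i) /=; last by rewrite lt ltnn.
exact: leq_addr.
Qed.

Lemma e_ax0 : ax0 L.
Proof.
move=> m k r s hle; apply: contrapT => hn.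
have H : forall i, exists x, f _ (r i) x /\ ~ f _ (s i) x.
  move=> i; apply: contrapT => hx; apply: hn; exists i; apply: efle => x hr.
  by apply: contrapT => hs; apply: hx; exists x; split.
pose X i := proj1_sig (cid (H i)).
pose pc (il : {i : 'I_m & 'I_(k i)}) := @part_cyl m k (tag il) (tagged il).
have pc_inj : injective pc.
  move=> [i l] [i' l'] /(congr1 (@nat_of_ord _)) /= e.
  have ii : i = i'.
    apply: ord_inj; case: (ltngtP i i') => // h; exfalso.
      have : l + \sum_(j < m | j < i) k j < l' + \sum_(j < m | j < i') k j.
        apply: leq_trans (leq_addl l' _); apply: leq_trans (psum_mono _ k _ _ h).
        by rewrite addnC ltn_add2l; exact: ltn_ord.
      by rewrite e ltnn.
    have : l' + \sum_(j < m | j < i') k j < l + \sum_(j < m | j < i) k j.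
      apply: leq_trans (leq_addl l _); apply: leq_trans (psum_mono _ k _ _ h).
      by rewrite addnC ltn_add2l; exact: ltn_ord.
    by rewrite e ltnn.
  subst i'; have ll : l = l' by apply: ord_inj; lia.
  by rewrite ll.
have card : #|{: {i : 'I_m & 'I_(k i)}}| = \sum_(i < m) k i.
  rewrite card_tagged sumnE big_map big_enum /=.
  by apply: eq_big => [i|i _]; [rewrite inE | rewrite card_ord].
have [g gK Kg] := inj_card_bij pc_inj (eq_leq (etrans (card_ord _) (esym card))).
pose w (j : 'I_(\sum_(i < m) k i)) := X (tag (g j)) (tagged (g j)).
have hw : forall i, (fun l => w (part_cyl l)) = X i.
  move=> i; apply: funext => l.
  have -> : @part_cyl m k i l = pc (existT _ i l) by [].
  by rewrite /w gK.
have := efle_inv _ _ _ hle w.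
rewrite f_bigmeet f_bigjoin => h.
have [i hs] : exists i, f _ (sub (part_cyl (i:=i)) (s i)) w.
  apply: h => i; rewrite fsub hw; exact: (proj1 (proj2_sig (cid (H i)))).
by rewrite fsub hw in hs; exact: (proj2 (proj2_sig (cid (H i)))) hs.
Qed.
End Easy.

Lemma easy (L : msalg) : represents_in_FO_algebra L -> fo_axioms L.
Proof.
case=> W [f hf].
split; first exact: (@e_ax0 L W f hf).
split; first exact: (@e_ax1 L W f hf).
split; first exact: (@e_ax2 L W f hf).
split; first exact: (@e_ax3 L W f hf).
split; first exact: (@e_ax4 L W f hf).
split; first exact: (@e_ax5 L W f hf).
split; first exact: (@e_ax6 L W f hf).
split; first exact: (@e_ax7 L W f hf).
split; first exact: (@e_ax8 L W f hf).
split; first exact: (@e_ax9 L W f hf).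
exact: (@e_ax10 L W f hf).
Qed.

Theorem theorem4p5 (L : msalg) :
  fo_axioms L <-> represents_in_FO_algebra L.
Proof.
split; last exact: easy.
case=> a0 [a1 [a2 [a3 [a4 [a5 [a6 [a7 [a8 [a9 a10]]]]]]]]].
by apply: hard.
Qed.
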